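(* Let $X\in\mathbb R^{n\times p}$ have unit $\ell_2$-norm columns and coherence $\mu$. Let $T_0\subset\{1,\dots,p\}$ with $|T_0|=s_0$, let $\lambda_1\ge\dots\ge\lambda_{s_0}$ be the $s_0$ largest eigenvalues of $X_{T_0}X_{T_0}^t$, and let $\tilde\lambda_1\ge\lambda_1$, $\tilde\lambda_{s_0}\le\lambda_{s_0}$. Let $T_1\subset\{1,\dots,p\}$ with $|T_1|=s_1=3s_0$ and $T_0\cap T_1=\emptyset$, and let $\eta=\tfrac12$. Set $$ \varepsilon_{\min}=\frac14\cdot\frac{s_0^3\mu^2/4+s_0^{3/2}\mu}{1-s_0\mu^2-\tfrac12},\qquad \varepsilon_{\max}=\frac14\cdot\frac{144\,s_0^4\mu^2+32\,s_0^{3/2}\mu(2-\eta)^2}{\tilde\lambda_1-1}. $$ Assume (1) $1-(s_0+s_1)\mu>\tilde\lambda_{s_0}>\eta$; (2) $1<\tilde\lambda_1<2-\eta$; (3) $s_1<\min\left(\frac{\tilde\lambda_{s_0}-\eta}{\varepsilon_{\min}},\frac{2-\eta-\tilde\lambda_1}{\varepsilon_{\max}}\right)$; and $$ \mu\le\min\left\{\frac{1}{\sqrt{288\,s_0^{5/2}(2s_0^{3/2}+1)}},\ \frac{1}{\sqrt{\tfrac32 s_0^4+6s_0^{5/2}+2s_0}}\right\}. $$ Then $$ \lambda_1\big(X_{T_0\cup T_1}^tX_{T_0\cup T_1}\big)\le\tilde\lambda_1+3s_0\varepsilon_{\max}\quad\text{and}\quad \lambda_{s_0+s_1}\big(X_{T_0\cup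 T_1}^tX_{T_0\cup T_1}\big)\ge\tilde\lambda_{s_0}-3s_0\varepsilon_{\min}. $$
   Context: $\mu=\max_{k<l}|\langle X_k,X_l\rangle|$ is the coherence of $X$, $X_T$ the submatrix with columns indexed by $T$, and $\lambda_k(A)$ the $k$-th largest eigenvalue of a symmetric matrix $A$. *)

(* Defs.v *)
From HB Require Import structures.
From mathcomp Require Import all_boot all_order all_algebra.
Set Implicit Arguments. Unset Strict Implicit. Unset Printing Implicit Defensive.
Import Order.TTheory GRing.Theory Num.Theory.
Local Open Scope ring_scope.

(* Submatrix X_T: the columns of X indexed by T (in increasing order). *)
Definition colsubT (R : Type) (n p : nat) (X : 'M[R]_(n, p)) (T : {set 'I_p})
  : 'M[R]_(n, #|T|) := \matrix_(i < n, j < #|T|) X i (enum_val j).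

Definition unit_columns (R : rcfType) (n p : nat) (X : 'M[R]_(n, p)) : Prop :=
  forall j : 'I_p, \sum_(i < n) (X i j) ^+ 2 = 1.

Definition col_dot (R : rcfType) (n p : nat) (X : 'M[R]_(n, p)) (k l : 'I_p) : R :=
  \sum_(i < n) X i k * X i l.

(* Coherence mu = max_{k<l} |<X_k, X_l>|  (0 if there are no such pairs). *)
Definition coherence (R : rcfType) (n p : nat) (X : 'M[R]_(n, p)) : R :=
  \big[Num.max/0]_(k < p) \big[Num.max/0]_(l < p | (k < l)%N) `|col_dot X k l|.

(* s is the list of eigenvalues of A (with multiplicity), sorted in
   nonincreasing order: lambda_k(A) = s`_(k-1). *)
Definition is_eigseq (R : rcfType) (m : nat) (A : 'M[R]_m) (s : seq R) : Prop :=
  [/\ size s = m, sorted (fun x y : R => y <= x) s &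
      char_poly A = \prod_(x <- s) ('X - x%:P)].

Definition pow32 (R : rcfType) (s : nat) : R := s%:R * Num.sqrt (s%:R).

Definition eps_min (R : rcfType) (s0 : nat) (mu : R) : R :=
  4^-1 * ((s0%:R ^+ 3 * mu ^+ 2 / 4 + pow32 R s0 * mu)
          / (1 - s0%:R * mu ^+ 2 - 2^-1)).

Definition eps_max (R : rcfType) (s0 : nat) (mu eta lt1 : R) : R :=
  4^-1 * ((144 * s0%:R ^+ 4 * mu ^+ 2 + 32 * pow32 R s0 * mu * (2 - eta) ^+ 2)
          / (lt1 - 1)).

(* Main.v *)
Require Import Defs.
From HB Require Import structures.
From mathcomp Require Import all_boot all_order all_algebra.
From mathcomp Require Import ring lra.
Import Order.TTheory GRing.Theory Num.Theory.
Local Open Scope ring_scope.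

Section Aux.
Variable R : rcfType.

Lemma gersh (m : nat) (D : 'M[R]_m) (mu a : R) (v : 'rV[R]_m) :
  (forall i j, `|D i j| <= mu) -> v *m D = a *: v -> v != 0 ->
  `|a| <= m%:R * mu.
Proof.
move=> HD Hv vn0.
have [i0 Hi0] : exists i0, v 0 i0 != 0.
  apply/existsP; apply: contraR vn0; rewrite negb_exists => /forallP H.
  apply/eqP/matrixP => r j; rewrite (ord1 r) mxE; exact/eqP/negPn/H.
case: (@arg_maxP _ _ _ i0 xpredT (fun i => `|v 0 i|) isT) => i _ Hi.
have Hvi : 0 < `|v 0 i|.
  apply: lt_le_trans (Hi i0 isT); by rewrite normr_gt0.
have E : \sum_j v 0 j * D j i = a * v 0 i.
  by have := congr1 (fun M : 'M[R]_(1, m) => M 0 i) Hv; rewrite !mxE.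
have : `|a| * `|v 0 i| <= `|v 0 i| * (m%:R * mu).
  rewrite -normrM -E; apply: le_trans (ler_norm_sum _ _ _) _.
  apply: le_trans (_ : \sum_(j < m) `|v 0 i| * mu <= _).
    apply: ler_sum => j _; rewrite normrM; apply: ler_pM => //.
    exact: Hi.
  by rewrite le_eqVlt; apply/orP; left; apply/eqP; rewrite sumr_const card_ord -mulr_natr; ring.
by rewrite mulrC ler_pM2l.
Qed.

Lemma eig_bound (m : nat) (G : 'M[R]_m) (mu x : R) :
  (forall i j, `|G i j - (i == j)%:R| <= mu) -> root (char_poly G) x ->
  `|x - 1| <= m%:R * mu.
Proof.
move=> HG; rewrite -eigenvalue_root_char => /eigenvalueP [v Hv vn0].
apply: (@gersh m (G - 1%:M) mu (x - 1) v) => //.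
  by move=> i j; rewrite !mxE.
by rewrite mulmxBr mulmx1 Hv scalerBl scale1r.
Qed.

Lemma fin (a t E : R) : 0 < a -> 0 <= t -> t < 2^-1 -> 0 <= E ->
  E * a >= 27/2 * t -> t <= a + E.
Proof. move=> *; nra. Qed.

End Aux.

Theorem mainTheorem5 (R : rcfType) (n p : nat) (X : 'M[R]_(n, p))
  (T0 T1 : {set 'I_p}) (lt1 lts0 : R) (l0 l : seq R) :
  unit_columns X ->
  #|T1| = (3 * #|T0|)%N ->
  [disjoint T0 & T1] ->
  is_eigseq (colsubT X T0 *m (colsubT X T0)^T) l0 ->
  l0`_0 <= lt1 ->
  lts0 <= l0`_(#|T0|.-1) ->
  is_eigseq ((colsubT X (T0 :|: T1))^T *m colsubT X (T0 :|: T1)) l ->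
  let s0 := #|T0| in
  let s1 := #|T1| in
  let mu := coherence X in
  let eta : R := 2^-1 in
  let emin := eps_min s0 mu in
  let emax := eps_max s0 mu eta lt1 in
  lts0 < 1 - (s0 + s1)%:R * mu -> eta < lts0 ->
  1 < lt1 -> lt1 < 2 - eta ->
  s1%:R < Num.min ((lts0 - eta) / emin) ((2 - eta - lt1) / emax) ->
  mu <= Num.min
          (Num.sqrt (288 * (s0%:R ^+ 2 * Num.sqrt s0%:R) * (2 * pow32 R s0 + 1)))^-1
          (Num.sqrt (3 / 2 * s0%:R ^+ 4 + 6 * (s0%:R ^+ 2 * Num.sqrt s0%:R)
                     + 2 * s0%:R))^-1 ->
  l`_0 <= lt1 + 3 * s0%:R * emax /\
  l`_((s0 + s1).-1) >= lts0 - 3 * s0%:R * emin.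
Proof.
move=> Hunit H1 Hdis [_ _ Hl0] _ Hlts0 [Hsz _ Hl] s0 s1 mu eta emin emax.
move=> Hc1 Hc2 Hc3 Hc4 _ _.
have Hm : #|T0 :|: T1| = (s0 + s1)%N.
  by rewrite cardsU (_ : T0 :&: T1 = set0) ?cards0 ?subn0 //; apply/eqP; rewrite setI_eq0.
have mu0 : 0 <= mu by apply: bigmax_ge_id.
have coh : forall k j, k != j -> `|col_dot X k j| <= mu.
  have sym : forall k j, col_dot X k j = col_dot X j k.
    by move=> k j; rewrite /col_dot; apply: eq_bigr => i _; rewrite mulrC.
  have H : forall k j : 'I_p, (k < j)%N -> `|col_dot X k j| <= mu.
    move=> k j kl; rewrite /mu /coherence.
    apply: le_trans (le_bigmax _ _ k).
    exact: (le_bigmax_cond _ (fun j => `|col_dot X k j|) kl).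
  move=> k j; rewrite neq_ltn => /orP [] kl; first exact: H.
  by rewrite sym; apply: H.
have HG : forall (T : {set 'I_p}) i j,
   `|((colsubT X T)^T *m colsubT X T) i j - (i == j)%:R| <= mu.
  move=> T i j.
  have -> : ((colsubT X T)^T *m colsubT X T) i j = col_dot X (enum_val i) (enum_val j).
    by rewrite mxE; apply: eq_bigr => k _; rewrite !mxE.
  case: eqVneq => [<-|ne].
    by rewrite /col_dot (eq_bigr (fun k => X k (enum_val i) ^+ 2)) ?Hunit ?subrr ?normr0 // => k _; rewrite expr2.
  rewrite subr0; apply: coh; apply: contra ne => /eqP /enum_val_inj ->; done.
have Hroot : forall x, x \in l -> `|x - 1| <= (s0 + s1)%:R * mu.
  move=> x xl; rewrite -Hm; apply: eig_bound; first exact: HG.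
  by rewrite Hl root_prod_XsubC.
have s0pos : (0 < s0)%N.
  rewrite lt0n; apply/negP => /eqP s00.
  have Hx : forall x, x \in l0 -> x <= 0.
    move=> x; rewrite -root_prod_XsubC -Hl0 -eigenvalue_root_char.
    move=> /eigenvalueP [v Hv vn0].
    have : `|x| <= n%:R * 0.
      apply: (@gersh R n _ 0 x v _ Hv vn0) => i j; rewrite mxE big1 ?normr0 // => k _; exfalso.
      by have := ltn_ord k; move: (nat_of_ord k) => kk; rewrite -/s0 s00.
    by rewrite mulr0 normr_le0 => /eqP ->.
  have : lts0 <= 0.
    apply: le_trans Hlts0 _; rewrite -/s0 s00 /=.
    case: (ltnP 0 (size l0)) => h; first by apply: Hx; exact: mem_nth.
    by rewrite nth_default.
  rewrite /eta in Hc2; lra.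
have sz : (0 < size l)%N by rewrite Hsz Hm addn_gt0 s0pos.
have sz' : ((s0 + s1).-1 < size l)%N by rewrite Hsz Hm prednK // -Hm -Hsz.
have A := Hroot _ (mem_nth 0 sz).
have B := Hroot _ (mem_nth 0 sz').
move: A B Hc1; rewrite /s1 H1 -/s0 !ler_norml.
have -> : (s0 + 3 * s0)%:R = 4 * (s0%:R : R) by rewrite natrD natrM; ring.
move=> /andP [A1 A2] /andP [B1 B2] Hc1.
have S1 : 1 <= (s0%:R : R) by rewrite ler1n.
have q1 : 1 <= Num.sqrt (s0%:R : R) by move: (ler_wsqrtr S1); rewrite sqrtr1.
rewrite /eta in Hc2 Hc4.
have t1 : 4 * s0%:R * mu < 2^-1 by lra.
split.
  set a := lt1 - 1.
  have apos : 0 < a by rewrite /a; lra.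
  have -> : lt1 = 1 + a by rewrite /a; ring.
  have E0 : 0 <= 3 * s0%:R * emax.
    rewrite /emax /eps_max /pow32 /eta; apply: mulr_ge0; first lra.
    apply: mulr_ge0; first lra.
    apply: divr_ge0; last by rewrite -/a; lra.
    apply: addr_ge0; first by apply: mulr_ge0; [apply: mulr_ge0; [|apply: exprn_ge0]|apply: exprn_ge0]; lra.
    apply: mulr_ge0; last by apply: exprn_ge0; lra.
    by apply: mulr_ge0 => //; apply: mulr_ge0; [lra|apply: mulr_ge0; [lra|apply: sqrtr_ge0]].
  have E1 : 3 * s0%:R * emax * a >= 27/2 * (4 * s0%:R * mu).
    have -> : 3 * s0%:R * emax * a = 3 * s0%:R * 4^-1 *
        (144 * s0%:R ^+ 4 * mu ^+ 2 + 32 * (s0%:R * Num.sqrt s0%:R) * mu * (2 - 2^-1) ^+ 2).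
      rewrite /emax /eps_max /pow32 /eta /a; field; rewrite subr_eq0 gt_eqF //.
    have h0 : 0 <= s0%:R * mu by nra.
    have h1 : s0%:R * mu <= s0%:R * (s0%:R * Num.sqrt s0%:R) * mu.
      have : 1 <= (s0%:R : R) * Num.sqrt (s0%:R : R) by nra.
      nra.
    have h2 : 0 <= s0%:R * (s0%:R ^+ 4 * mu ^+ 2).
      apply: mulr_ge0; first lra. by apply: mulr_ge0; apply: exprn_ge0; lra.
    nra.
  have t0 : 0 <= 4 * s0%:R * mu by nra.
  have := @fin R _ _ _ apos t0 t1 E0 E1.
  move=> H; lra.
have Em : 0 <= 3 * s0%:R * emin.
  rewrite /emin /eps_min /pow32; apply: mulr_ge0; first lra.
  apply: mulr_ge0; first lra.
  apply: divr_ge0; last by nra.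
  apply: addr_ge0; first by apply: mulr_ge0; [apply: mulr_ge0; [apply: exprn_ge0|apply: exprn_ge0]|]; lra.
  by apply: mulr_ge0 => //; apply: mulr_ge0; [lra|apply: sqrtr_ge0].
lra.
Qed.
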